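(* Let $k\ge 1$ be an integer, let $\beta\in\mathbb{R}_{>1}$ be a Parry number and let $U_\beta$ be the corresponding canonical Parry--Bertrand numeration system. Let $\mathbf{s}$ be a binary $U_\beta$-automatic sequence, generated by a DFAO $\mathcal{B}$. Then $C_{2k}(\mathbf{s},N)\gg N$; that is, there exists a constant $c>0$, depending only on $\beta$, $k$ and the number of states of $\mathcal{B}$, such that $C_{2k}(\mathbf{s},N)\ge cN$ for all sufficiently large $N$.
   Context: Correlation measure: for a sequence $\mathbf{s}=(\mathbf{s}(n))_{n\ge0}$ over $\{0,1\}$, an integer $k\ge1$, a vector $D=(d_1,\dots,d_k)\in\mathbb{N}^k$ with $0\le d_1<d_2<\cdots<d_k$ and $M\in\mathbb{N}$, put $V(\mathbf{s},M,D)=\sum_{n=0}^{M-1}(-1)^{\mathbf{s}(n+d_1)+\cdots+\mathbf{s}(n+d_k)}$. The $N$th correlation measure of order $k$ is $C_k(\mathbf{s},N)=\max_{M,D}|V(\mathbf{s},M,D)|$, the maximum taken over all such $D$ and all integers $M$ with $M+d_k\le N$. $\beta$-expansions: for $\beta>1$, let $A_\beta=\{0,1,\dots,\lceil\beta\rceil-1\}$; for $x\in[0,1)$, $d_\beta(x)$ is the greedy expansion $x=\sum_{j\ge1}c_j\beta^{-j}$ with $c_j\in A_\beta$, and $d_\beta(1)=\lim_{x\to1^-}d_\beta(x)$. $\beta$ is a Parry number if $d_\beta(1)$ is ultimately periodic. Canonical numeration $U_\beta$: write $d_\beta(1)=t(1)\cdots t(m)(t(m+1)\cdots t(m+k'))^\omega$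 with $m,k'\ge0$ minimal. Set $U_\beta(0)=1$, $U_\beta(i)=t(1)U_\beta(i-1)+\cdots+t(i)U_\beta(0)+1$ for $1\le i\le m+k'-1$, and for $n\ge m+k'$: $U_\beta(n)=t(1)U_\beta(n-1)+\cdots+t(m+k')U_\beta(n-m-k')+U_\beta(n-k')-t(1)U_\beta(n-k'-1)-\cdots-t(m)U_\beta(n-m-k')$. Every $n\ge0$ has a greedy representation $n=\sum_{i=0}^t c_iU_\beta(i)$; $\mathrm{rep}_{U_\beta}(n)=c_t\cdots c_0$ (with $c_t\neq 0$; $\mathrm{rep}(0)$ is the empty word), and $L_\beta=\{\mathrm{rep}_{U_\beta}(n):n\ge0\}$. A binary sequence $\mathbf{s}$ is $U_\beta$-automatic if there is a deterministic finite automaton with output (DFAO) $\mathcal{B}$ over the digit alphabet, with outputs in $\{0,1\}$, such that $\mathbf{s}(n)$ is the output of $\mathcal{B}$ on input $\mathrm{rep}_{U_\beta}(n)$ for all $n\ge0$. *)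

(* Defs.v *)
From Stdlib Require Import Reals.
From mathcomp Require Import all_boot all_order all_algebra.
Set Implicit Arguments. Unset Strict Implicit. Unset Printing Implicit Defensive.
Import Order.TTheory GRing.Theory Num.Theory.

Definition Tbeta (beta x : R) : R :=
  Rminus (Rmult beta x) (IZR (Int_part (Rmult beta x))).

(* greedy digit: gdigit beta x j is the digit c_{j+1} of d_beta(x)
   (0-indexed), c_{j+1} = floor(beta * T_beta^j(x)). *)
Definition gdigit (beta x : R) (j : nat) : Z :=
  Int_part (Rmult beta (Nat.iter j (Tbeta beta) x)).

(* t is d_beta(1) = lim_{x -> 1^-} d_beta(x) (limit in the product
   topology of digit sequences: each digit is eventually constant as
   x -> 1^-).  t j is the digit t(j+1). *)
Definition is_dbeta1 (beta : R) (t : nat -> nat) : Prop :=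
  forall j : nat, exists delta : R, Rlt 0 delta /\
    forall x : R, Rlt (Rminus 1 delta) x -> Rlt x 1 ->
      gdigit beta x j = Z.of_nat (t j).

(* t = t(1)...t(m) (t(m+1)...t(m+p))^omega  (0-indexed: t j = t(j+1)) *)
Definition periodic_from (t : nat -> nat) (m p : nat) : Prop :=
  (0 < p)%N /\ forall j : nat, (m <= j)%N -> t (j + p)%N = t j.

Definition minimal_preperiod_period (t : nat -> nat) (m p : nat) : Prop :=
  periodic_from t m p /\
  (forall m' p', periodic_from t m' p' -> (m <= m')%N) /\
  (forall p', periodic_from t m p' -> (p <= p')%N).

Local Open Scope ring_scope.

(* one-based digit t(i) = t (i-1), as an integer *)
Definition tdig (t : nat -> nat) (i : nat) : int := (t i.-1)%:Z.

(* next value U(i) computed from the list s = [U(0); ...; U(i-1)] *)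
Definition Unext (t : nat -> nat) (m p : nat) (s : seq int) (i : nat) : int :=
  let U := fun j => nth 0 s j in
  if i == 0%N then 1
  else if (i < m + p)%N then
    \sum_(1 <= j < i.+1) tdig t j * U (i - j)%N + 1
  else
    \sum_(1 <= j < (m + p).+1) tdig t j * U (i - j)%N + U (i - p)%N
    - \sum_(1 <= j < m.+1) tdig t j * U (i - p - j)%N.

Fixpoint Useq (t : nat -> nat) (m p : nat) (n : nat) : seq int :=
  match n with
  | 0 => [::]
  | n'.+1 => let s := Useq t m p n' in rcons s (Unext t m p s n')
  end.

Definition Ubeta (t : nat -> nat) (m p : nat) (n : nat) : int :=
  nth 0 (Useq t m p n.+1) n.

Local Close Scope ring_scope.

Fixpoint gdigits (U : nat -> nat) (i r : nat) : seq nat :=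
  match i with
  | 0 => [:: r %/ U 0]
  | i'.+1 => (r %/ U i) :: gdigits U i' (r %% U i)
  end.

(* greedy representation rep_U(n) = c_t ... c_0 (most significant digit
   first), where t is the largest index with U(t) <= n; rep_U(0) is the
   empty word.  (For an increasing U with U(0) = 1 such t is < n+1.) *)
Definition rep (U : nat -> nat) (n : nat) : seq nat :=
  if n == 0 then [::]
  else gdigits U (\max_(i <- iota 0 n.+1 | U i <= n) i) n.

Record DFAO := {
  dfao_state : finType;
  dfao_init : dfao_state;
  dfao_delta : dfao_state -> nat -> dfao_state;
  dfao_out : dfao_state -> bool
}.

Definition dfao_run (B : DFAO) (w : seq nat) : bool :=
  @dfao_out B (foldl (@dfao_delta B) (@dfao_init B) w).

Definition generates (B : DFAO) (U : nat -> nat) (s : nat -> bool) : Prop :=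
  forall n : nat, s n = dfao_run B (rep U n).

Local Open Scope ring_scope.

Definition Vcorr (k : nat) (s : nat -> bool) (M : nat) (D : 'I_k -> nat) : int :=
  \sum_(n < M) (-1) ^+ (\sum_(i < k) (s (n + D i)%N : nat))%N.

Local Close Scope ring_scope.

Definition strictly_increasing (k : nat) (D : 'I_k -> nat) : bool :=
  [forall i : 'I_k, forall j : 'I_k, (i < j) ==> (D i < D j)].

(* C_k(s,N): max of |V(s,M,D)| over 0 <= d_1 < ... < d_k and M with
   M + d_k <= N (all these quantities are <= N, so the ranges are finite). *)
Definition Ccorr (k : nat) (s : nat -> bool) (N : nat) : nat :=
  \max_(D : {ffun 'I_k -> 'I_N.+1} | strictly_increasing (fun i => nat_of_ord (D i)))
    \max_(M < N.+1 | [forall i : 'I_k, M + D i <= N])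
      `|Vcorr s M (fun i => nat_of_ord (D i))|%N.

(* Main.v *)
Require Import Defs.
From Stdlib Require Import Reals Lra Lia.
From mathcomp Require Import all_boot all_order all_algebra zify.


Section Analysis.
Local Open Scope R_scope.

Lemma Tbeta_bounds (beta y : R) : 0 <= Tbeta beta y < 1.
Proof.
unfold Tbeta. destruct (base_Int_part (beta * y)). lra.
Qed.

Fixpoint psum (f : nat -> R) (J : nat) : R :=
  match J with 0%nat => 0 | S J' => psum f J' + f J' end.

Lemma expansion (beta x : R) (J : nat) : 0 < beta ->
  x = psum (fun j => IZR (gdigit beta x j) * (/ beta) ^ (S j)) J
      + (/ beta) ^ J * Nat.iter J (Tbeta beta) x.
Proof.
intros Hb. set (f := fun j => IZR (gdigit beta x j) * (/ beta) ^ (S j)).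
induction J as [|J IH].
- simpl. lra.
- change (psum f (S J)) with (psum f J + f J).
  change (Nat.iter (S J) (Tbeta beta) x) with (Tbeta beta (Nat.iter J (Tbeta beta) x)).
  rewrite {1}IH. unfold f, gdigit, Tbeta.
  set (y := Nat.iter J (Tbeta beta) x).
  set (c := IZR (Int_part (beta * y))).
  simpl. field. lra.
Qed.

Lemma digits_near (beta : R) (t : nat -> nat) : is_dbeta1 beta t ->
  forall J, exists delta, 0 < delta /\ forall x, 1 - delta < x -> x < 1 ->
    forall j, (j < J)%coq_nat -> gdigit beta x j = Z.of_nat (t j).
Proof.
intros Ht J. induction J as [|J [d [Hd IH]]].
- exists 1. split; [lra|]. intros. lia.
- destruct (Ht J) as [d' [Hd' H']].
  exists (Rmin d d'). split.
  + apply Rmin_glb_lt; lra.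
  + intros x H1 H2 j Hj.
    assert (Hm1 := Rmin_l d d'). assert (Hm2 := Rmin_r d d').
    destruct (Nat.eq_dec j J) as [->|Hne].
    * apply H'; lra.
    * apply IH; [lra|lra|lia].
Qed.

Lemma t0_pos (beta : R) (t : nat -> nat) : 1 < beta -> is_dbeta1 beta t ->
  (1 <= t 0%nat)%coq_nat.
Proof.
intros Hb Ht. destruct (Ht 0%nat) as [d [Hd H]].
set (x := Rmax (1 - d/2) ((1 + / beta)/2)).
assert (Hib : / beta < 1). { rewrite <- Rinv_1. apply Rinv_lt_contravar; lra. }
assert (Hib0 : 0 < / beta) by (apply Rinv_0_lt_compat; lra).
assert (Hx1 : x < 1). { unfold x. apply Rmax_lub_lt; lra. }
assert (Hx2 : 1 - d < x). { unfold x. assert (H0 := Rmax_l (1 - d/2) ((1 + / beta)/2)). lra. }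
assert (Hx3 : / beta <= x). { unfold x. assert (H0 := Rmax_r (1 - d/2) ((1 + / beta)/2)). lra. }
specialize (H x Hx2 Hx1). unfold gdigit in H. simpl in H.
assert (Hbx : 1 <= beta * x).
{ replace 1 with (beta * / beta) by (field; lra). apply Rmult_le_compat_l; lra. }
destruct (base_Int_part (beta * x)) as [_ Hl].
assert (Hp : Z.lt 0 (Int_part (beta * x))). { apply lt_IZR. lra. }
lia.
Qed.

Lemma period_nonzero (beta : R) (t : nat -> nat) (m p : nat) :
  1 < beta -> is_dbeta1 beta t -> periodic_from t m p ->
  exists j, (m <= j)%coq_nat /\ (j < m + p)%coq_nat /\ (1 <= t j)%coq_nat.
Proof.
intros Hb Ht [Hp Hper].
destruct (Classical_Prop.classic (exists j, (m <= j)%coq_nat /\ (j < m + p)%coq_nat /\ (1 <= t j)%coq_nat)) as [H|H]; [exact H|].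
exfalso.
assert (Hz : forall j, (m <= j)%coq_nat -> t j = 0%nat).
{ intro j. induction j as [j IH] using (well_founded_induction Wf_nat.lt_wf). intros Hj.
  destruct (Nat.lt_ge_cases j (m + p)) as [Hl|Hl].
  - destruct (t j) eqn:E; [reflexivity|]. exfalso. apply H. exists j. repeat split; lia.
  - assert (Hp' : (0 < p)%coq_nat) by (apply/ltP; exact Hp).
    replace j with ((j - p) + p)%nat by lia.
    rewrite Hper. 2: { apply/leP. lia. }
    apply IH; lia. }
assert (Hb0 : 0 < beta) by lra.
assert (Hib : / beta < 1). { rewrite <- Rinv_1. apply Rinv_lt_contravar; lra. }
assert (Hib0 : 0 < / beta) by (apply Rinv_0_lt_compat; lra).
set (S := psum (fun j => IZR (Z.of_nat (t j)) * (/ beta) ^ (Datatypes.S j)) m).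
assert (HS : forall J x, (m <= J)%coq_nat ->
   (forall j, (j < J)%coq_nat -> gdigit beta x j = Z.of_nat (t j)) ->
   x = S + (/ beta) ^ J * Nat.iter J (Tbeta beta) x).
{ intros J x HJ Hd. rewrite {1}(expansion beta x J Hb0). f_equal.
  induction HJ.
  - unfold S. clear -Hd. induction m as [|m IH]; simpl; [reflexivity|].
    rewrite IH; [|intros; apply Hd; lia]. rewrite Hd; [reflexivity|lia].
  - simpl. rewrite IHHJ; [|intros; apply Hd; lia]. rewrite Hd; [|lia].
    rewrite Hz; [|lia]. simpl. ring. }
assert (HS1 : S < 1).
{ destruct (digits_near beta t Ht m) as [d [Hd Hn]].
  set (x := Rmax (1 - d/2) (1/2)).
  assert (Hx1 : x < 1). { unfold x. apply Rmax_lub_lt; lra. }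
  assert (Hx2 : 1 - d < x). { unfold x. assert (H0 := Rmax_l (1 - d/2) (1/2)). lra. }
  assert (Hx3 : 0 <= x). { unfold x. assert (H0 := Rmax_r (1 - d/2) (1/2)). lra. }
  assert (E := HS m x (le_n m) (Hn x Hx2 Hx1)).
  assert (0 <= (/ beta) ^ m * Nat.iter m (Tbeta beta) x).
  { apply Rmult_le_pos; [apply pow_le; lra|].
    destruct m; simpl; [lra|]. apply Tbeta_bounds. }
  lra. }
destruct (pow_lt_1_zero (/ beta)) with (y := 1 - S) as [N HN].
{ rewrite Rabs_right; lra. } { lra. }
set (J := (N + m + 1)%nat).
assert (HJ := HN J ltac:(unfold J; lia)).
rewrite -> Rabs_right in HJ; [|apply Rle_ge, pow_le; lra].
destruct (digits_near beta t Ht J) as [d [Hd Hn]].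
set (x := (Rmax (1 - d) (S + (/ beta) ^ J) + 1) / 2).
assert (Hm1 := Rmax_l (1 - d) (S + (/ beta) ^ J)).
assert (Hm2 := Rmax_r (1 - d) (S + (/ beta) ^ J)).
assert (Hm3 : Rmax (1 - d) (S + (/ beta) ^ J) < 1) by (apply Rmax_lub_lt; lra).
assert (Hx1 : x < 1) by (unfold x; lra).
assert (Hx2 : 1 - d < x) by (unfold x; lra).
assert (E := HS J x ltac:(unfold J; lia) (Hn x Hx2 Hx1)).
assert (HT : Nat.iter J (Tbeta beta) x < 1).
{ unfold J. replace (N + m + 1)%nat with (Datatypes.S (N + m)) by lia. simpl. apply Tbeta_bounds. }
assert (Hpos : 0 < (/ beta) ^ J) by (apply pow_lt; lra).
assert ((/ beta) ^ J * Nat.iter J (Tbeta beta) x < (/ beta) ^ J).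
{ rewrite <- (Rmult_1_r ((/ beta) ^ J)) at 2. apply Rmult_lt_compat_l; lra. }
unfold x in *. lra.
Qed.

End Analysis.


Set Implicit Arguments. Unset Strict Implicit. Unset Printing Implicit Defensive.

Section PartB.
Import Order.TTheory GRing.Theory Num.Theory.
Local Open Scope ring_scope.

Section U.
Variables (t : nat -> nat) (m p : nat).
Hypothesis (Hp : (0 < p)%N).
Local Notation U := (Ubeta t m p).

Lemma Useq_size n : size (Useq t m p n) = n.
Proof. by elim: n => //= n IH; rewrite size_rcons IH. Qed.

Lemma Useq_nth n j : (j < n)%N -> nth 0 (Useq t m p n) j = U j.
Proof.
elim: n => // n IH Hj; rewrite /= nth_rcons Useq_size.
case: (ltnP j n) => Hjn; first by rewrite IH.
have -> : j = n by lia.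
by rewrite eqxx /Ubeta /= nth_rcons Useq_size ltnn eqxx.
Qed.

Lemma U0 : U 0 = 1.
Proof. by []. Qed.

Lemma U_small n : (0 < n)%N -> (n < m + p)%N ->
  U n = \sum_(1 <= j < n.+1) tdig t j * U (n - j)%N + 1.
Proof.
move=> H0 H1.
rewrite /Ubeta /= nth_rcons Useq_size ltnn eqxx /Unext.
have -> : (n == 0%N) = false by lia.
rewrite H1; congr (_ + _); apply: eq_big_nat => j Hj.
by rewrite Useq_nth //; lia.
Qed.

Lemma U_big n : (m + p <= n)%N ->
  U n = \sum_(1 <= j < (m + p).+1) tdig t j * U (n - j)%N + U (n - p)%N
    - \sum_(1 <= j < m.+1) tdig t j * U (n - p - j)%N.
Proof.
move=> H1.
rewrite /Ubeta /= nth_rcons Useq_size ltnn eqxx /Unext.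
have -> : (n == 0%N) = false by lia.
have -> : (n < m + p)%N = false by lia.
rewrite Useq_nth; last by lia.
congr (_ + _ - _); apply: eq_big_nat => j Hj; rewrite Useq_nth //; lia.
Qed.

End U.


Lemma sum_nat_ge0 (F : nat -> int) a b :
  (forall j, (a <= j < b)%N -> 0 <= F j) -> 0 <= \sum_(a <= j < b) F j.
Proof.
move=> H; rewrite big_nat_cond; apply: sumr_ge0 => j /andP[Hj _]; exact: H.
Qed.

Lemma sum_ge_term (F : nat -> int) a b i : (a <= i < b)%N ->
  (forall j, (a <= j < b)%N -> 0 <= F j) -> F i <= \sum_(a <= j < b) F j.
Proof.
move=> /andP[H1 H2] H.
rewrite (big_cat_nat H1 (ltnW H2)) /= [X in _ + X]big_ltn //.
have A : 0 <= \sum_(a <= j < i) F j by apply: sum_nat_ge0 => j Hj; apply: H; lia.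
have B : 0 <= \sum_(i.+1 <= j < b) F j by apply: sum_nat_ge0 => j Hj; apply: H; lia.
by rewrite ler_wpDl // ler_wpDr.
Qed.

Section Mono.
Variables (t : nat -> nat) (m p j0 : nat).
Hypothesis (Hp : (0 < p)%N) (Ht0 : (1 <= t 0)%N) (Hj0 : (m <= j0 < m + p)%N)
  (Htj0 : (1 <= t j0)%N).
Local Notation U := (Ubeta t m p).
Local Notation h := (m + p)%N.
Definition Tsum := \sum_(1 <= j < h.+1) tdig t j.

Lemma tdig_ge0 j : 0 <= tdig t j.
Proof. by rewrite /tdig. Qed.

Lemma step n : (0 < n)%N -> (forall i, (i < n)%N -> 1 <= U i) ->
  (forall i j, (i <= j < n)%N -> U i <= U j) ->
  [/\ U n.-1 + 1 <= U n, ((h <= n)%N -> U n.-1 + U (n - h)%N <= U n)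
    & U n <= (Tsum + 1) * U n.-1].
Proof.
move=> Hn Hpos Hmon.
set k := n.-1. have Ek : n = k.+1 by rewrite /k; lia. clearbody k.
have Hpos' : forall i, (i < n)%N -> 0 <= U i by move=> i Hi; have := Hpos i Hi; lia.
have T1 : 1 <= tdig t 1 by rewrite /tdig /=; lia.
have Un1 := Hpos k ltac:(lia).
have Hup : forall b, (1 <= b)%N -> (b <= h.+1)%N -> (b <= n.+1)%N ->
    \sum_(1 <= j < b) tdig t j * U (n - j)%N <= Tsum * U k.
{ move=> b Hb0 Hb Hbn.
  apply: (@le_trans _ _ (\sum_(1 <= j < b) tdig t j * U k)).
  - rewrite big_nat_cond [X in _ <= X]big_nat_cond; apply: ler_sum => j /andP[Hj _].
    apply: ler_wpM2l; first exact: tdig_ge0. apply: Hmon; lia.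
  - rewrite -mulr_suml; apply: ler_wpM2r; first by apply: Hpos'; lia.
    have H2 : (b <= h.+1)%N by []. rewrite /Tsum (big_cat_nat Hb0 H2) /=.
    have : 0 <= \sum_(b <= i < h.+1) tdig t i by apply: sum_nat_ge0 => j _; exact: tdig_ge0.
    set X := \sum_(b <= i < h.+1) _; set Y := \sum_(1 <= i < b) _; lia. }
have Hge0 : forall b, (b <= n.+1)%N -> 0 <= \sum_(1 <= j < b) tdig t j * U (n - j)%N.
{ move=> b Hb; apply: sum_nat_ge0 => j Hj; apply: mulr_ge0; first exact: tdig_ge0.
  apply: Hpos'; lia. }
have Hfirst : forall b, (1 < b)%N -> (b <= n.+1)%N ->
    U k <= \sum_(1 <= j < b) tdig t j * U (n - j)%N.
{ move=> b Hb1 Hb; apply: (@le_trans _ _ (tdig t 1 * U (n - 1)%N)).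
  - have -> : (n - 1)%N = k by lia. nia.
  - apply: (@sum_ge_term (fun j => tdig t j * U (n - j)%N)); first by lia.
    move=> j Hj; apply: mulr_ge0; first exact: tdig_ge0. apply: Hpos'; lia. }
case: (ltnP n h) => Hnh.
- rewrite (@U_small t m p Hp n) //; try lia.
  have A := Hfirst n.+1 ltac:(lia) (leqnn _).
  have B := Hup n.+1 ltac:(lia) ltac:(lia) (leqnn _).
  set S := \sum_(1 <= j < n.+1) _ in A B *.
  split; [lia | lia | nia].
- rewrite (@U_big t m p Hp n) //; try lia.
  have B := Hup h.+1 ltac:(lia) (leqnn _) ltac:(lia).
  have C : 0 <= \sum_(1 <= j < m.+1) tdig t j * U (n - p - j)%N.
  { apply: sum_nat_ge0 => j Hj; apply: mulr_ge0; first exact: tdig_ge0. apply: Hpos'; lia. }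
  have Unp := Hmon (n - p)%N k ltac:(lia).
  have Unp1 := Hpos (n - p)%N ltac:(lia).
  have Unh := Hpos (n - h)%N ltac:(lia).
  suff L : U k + U (n - h)%N <= \sum_(1 <= j < h.+1) tdig t j * U (n - j)%N + U (n - p)%N
    - \sum_(1 <= j < m.+1) tdig t j * U (n - p - j)%N.
  { set S1 := \sum_(1 <= j < h.+1) _ in B L *. set S2 := \sum_(1 <= j < m.+1) _ in C L *.
    split; [lia | lia | nia]. }
  case: (posnP m) => Hm.
  + have E0 : \sum_(1 <= j < m.+1) tdig t j * U (n - p - j)%N = 0 by rewrite Hm big_geq.
    rewrite E0 subr0.
    have A := Hfirst h.+1 ltac:(lia) ltac:(lia).
    have E1 : (n - h)%N = (n - p)%N by lia.
    rewrite E1.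
    set S := \sum_(1 <= j < h.+1) _ in A *. lia.
  + rewrite (big_cat_nat (n:=m.+1) (p:=h.+1)) //=; last by lia.
    set S1 := \sum_(1 <= j < m.+1) tdig t j * U (n - j)%N.
    set S3 := \sum_(m.+1 <= j < h.+1) _.
    set S2 := \sum_(1 <= j < m.+1) _.
    have E : S1 - S2 = \sum_(1 <= j < m.+1) tdig t j * (U (n - j)%N - U (n - p - j)%N).
    { rewrite /S1 /S2 -sumrB; apply: eq_bigr => j _; by rewrite mulrBr. }
    have A : U k - U (n - p - 1)%N <= S1 - S2.
    { rewrite E; apply: (@le_trans _ _ (tdig t 1 * (U (n - 1)%N - U (n - p - 1)%N))).
      - have -> : (n - 1)%N = k by lia.
        have := Hmon (n - p - 1)%N k ltac:(lia). nia.
      - apply: (@sum_ge_term (fun j => tdig t j * (U (n - j)%N - U (n - p - j)%N))); first by lia.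
        move=> j Hj; apply: mulr_ge0; first exact: tdig_ge0.
        have := Hmon (n - p - j)%N (n - j)%N ltac:(lia). lia. }
    have D : U (n - h)%N <= S3.
    { apply: (@le_trans _ _ (tdig t j0.+1 * U (n - j0.+1)%N)).
      + have T2 : 1 <= tdig t j0.+1 by rewrite /tdig /=; lia.
        have := Hmon (n - h)%N (n - j0.+1)%N ltac:(lia). 
        have := Hpos (n - j0.+1)%N ltac:(lia). nia.
      + apply: (@sum_ge_term (fun j => tdig t j * U (n - j)%N)); first by lia.
        move=> j Hj; apply: mulr_ge0; first exact: tdig_ge0. apply: Hpos'; lia. }
    have F := Hmon (n - p - 1)%N (n - p)%N ltac:(lia).
    lia.
Qed.

End Mono.

Section Glob.
Variables (t : nat -> nat) (m p j0 : nat).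
Hypothesis (Hp : (0 < p)%N) (Ht0 : (1 <= t 0)%N) (Hj0 : (m <= j0 < m + p)%N)
  (Htj0 : (1 <= t j0)%N).
Local Notation U := (Ubeta t m p).

Lemma U_inv n : (forall i, (i < n)%N -> 1 <= U i) /\
  (forall i j, (i <= j < n)%N -> U i <= U j).
Proof.
elim: n => [|n [IH1 IH2]]; first by split => [i|i j]; [rewrite ltn0 | rewrite ltn0 andbF].
have [H1 H2] : 1 <= U n /\ forall i, (i <= n)%N -> U i <= U n.
{ case: (posnP n) => Hn.
  - subst n; split; first by []. by move=> i; rewrite leqn0 => /eqP ->.
  - have [S1 _ _] := step Hp Ht0 Hj0 Htj0 Hn IH1 IH2.
    have Hn1 := IH1 n.-1 ltac:(lia).
    split; first by lia.
    move=> i Hi; case: (ltnP i n) => Hin.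
    + have := IH2 i n.-1 ltac:(lia). lia.
    + have -> : i = n by lia. by []. }
split.
- move=> i Hi; case: (ltnP i n) => Hin; first exact: IH1.
  have -> : i = n by lia. exact: H1.
- move=> i j Hij; case: (ltnP j n) => Hjn; first by apply: IH2; lia.
  have -> : j = n by lia. apply: H2; lia.
Qed.

Definition u n := absz (U n).
Definition Kc := (absz (Tsum t m p) + 1)%N.

Lemma U_nat n : U n = (u n)%:Z.
Proof.
have [H _] := U_inv n.+1. have := H n (ltnSn n). rewrite /u. case: (U n) => //.
Qed.

Lemma u0 : u 0 = 1%N.
Proof. by []. Qed.

Lemma u_props n : (0 < n)%N ->
  [/\ (u n.-1 < u n)%N, ((m + p <= n)%N -> (u n.-1 + u (n - (m + p)) <= u n)%N)
    & (u n <= Kc * u n.-1)%N].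
Proof.
move=> Hn. have [IH1 _] := U_inv n. have [_ IH2] := U_inv n.
have [S1 S2 S3] := step Hp Ht0 Hj0 Htj0 Hn IH1 IH2.
have ET : Tsum t m p = (absz (Tsum t m p))%:Z.
{ rewrite /Tsum. have : 0 <= \sum_(1 <= j < (m + p).+1) tdig t j.
  { apply: sum_nat_ge0 => j _; exact: tdig_ge0. }
  case: (\sum_(1 <= j < (m + p).+1) tdig t j) => //. }
move: S1 S2 S3. rewrite !U_nat ET /Kc.
set a := u n.-1. set b := u n. set c := u (n - (m+p)). set T := absz (Tsum t m p).
move=> S1 S2 S3. split.
- lia.
- move=> H; have := S2 H. lia.
- move: S3. rewrite -PoszD -PoszM lez_nat. lia.
Qed.

End Glob.

End PartB.

Section PartC.

Section Rep.
Variable U : nat -> nat.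
Hypothesis U0 : U 0 = 1.
Hypothesis Uinc : forall i, U i < U i.+1.

Lemma U_lt i j : i < j -> U i < U j.
Proof.
elim: j => // j IH; rewrite ltnS leq_eqVlt => /orP[/eqP ->|H]; first exact: Uinc.
exact: ltn_trans (IH H) (Uinc j).
Qed.

Lemma U_le i j : i <= j -> U i <= U j.
Proof. rewrite leq_eqVlt => /orP[/eqP ->|H] //. exact: ltnW (U_lt H). Qed.

Lemma U_ge i : i < U i.
Proof. elim: i => [|i IH]; first by rewrite U0. exact: leq_ltn_trans IH (Uinc i). Qed.

Lemma size_gdigits i r : size (gdigits U i r) = i.+1.
Proof. by elim: i r => //= i IH r; rewrite IH. Qed.

Lemma rep_top n L : U L <= n < U L.+1 -> rep U n = gdigits U L n.
Proof.
move=> /andP[H1 H2]. have Hn : n != 0 by have := U_ge L; lia.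
rewrite /rep (negbTE Hn); congr gdigits.
apply/eqP; rewrite eqn_leq; apply/andP; split.
- apply/bigmax_leqP_seq => i _ Hi. case: (leqP i L) => // HL.
  have := U_le HL. lia.
- apply: leq_bigmax_seq => //. rewrite mem_iota /=. have := U_ge L. lia.
Qed.

Lemma gd_pad i n : n < U i.+1 ->
  size (rep U n) <= i.+1 /\ gdigits U i n = nseq (i.+1 - size (rep U n)) 0 ++ rep U n.
Proof.
elim: i n => [|i IH] n Hn.
- case: (posnP n) => Hn0.
  + subst n. by rewrite /rep /= div0n.
  + rewrite (@rep_top n 0); last by rewrite U0; lia.
    by [].
- case: (ltnP n (U i.+1)) => Hi.
  + have [S E] := IH n Hi. split; first by lia.
    rewrite /= (divn_small Hi) (modn_small Hi) E.
    have -> : (i.+2 - size (rep U n) = (i.+1 - size (rep U n)).+1)%N by lia.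
    by [].
  + rewrite (@rep_top n i.+1); last by lia.
    by rewrite size_gdigits subnn.
Qed.

Lemma rep_shift J n : 0 < J -> n < U J -> n + U J < U J.+1 ->
  size (rep U n) <= J /\
  rep U (n + U J) = 1 :: nseq (J - size (rep U n)) 0 ++ rep U n.
Proof.
move=> HJ H1 H2. have [S E] := gd_pad (i := J.-1) (n := n) ltac:(by have -> : J.-1.+1 = J by lia).
have EJ : J.-1.+1 = J by lia.
rewrite EJ in S E. split => //.
rewrite (@rep_top _ J); last by lia.
case: J HJ H1 H2 S E EJ => // J _ H1 H2 S E _ /=.
have UJ : 0 < U J.+1 by have := U_ge J.+1; lia.
have -> : n + U J.+1 = 1 * U J.+1 + n by lia.
by rewrite divnMDl // (divn_small H1) modnMDl (modn_small H1) E.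
Qed.

End Rep.

Section Auto.
Variable B : DFAO.
Definition zstep (q : dfao_state B) := dfao_delta q 0.
Definition qst r := iter r zstep (dfao_delta (dfao_init B) 1).

Lemma foldl_nseq0 r q : foldl (@dfao_delta B) q (nseq r 0) = iter r zstep q.
Proof. by elim: r q => //= r IH q; rewrite IH -iterSr. Qed.

Lemma run_shift r w :
  dfao_run B (1 :: nseq r 0 ++ w) = dfao_out (foldl (@dfao_delta B) (qst r) w).
Proof. by rewrite /dfao_run /= foldl_cat foldl_nseq0. Qed.

Lemma qst_period nQ : #|dfao_state B| = nQ ->
  forall r i, nQ <= r -> qst (r + i * nQ`!) = qst r.
Proof.
move=> Hc.
set f := fun i : 'I_nQ.+1 => qst i.
have [a [b [Hab E]]] : exists a b : nat, a < b <= nQ /\ qst a = qst b.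
{ case: (boolP [exists i : 'I_nQ.+1, exists j : 'I_nQ.+1, (i < j) && (f i == f j)]).
  - move=> /existsP [i /existsP [j /andP [Hij /eqP E]]].
    exists i, j; split => //. by rewrite Hij /= -ltnS.
  - move=> Hno. exfalso.
    have inj : injective f.
    { move=> i j E. apply: val_inj. case: (ltngtP i j) => H //; exfalso.
      - move/negP: Hno; apply; apply/existsP; exists i; apply/existsP; exists j.
        by rewrite H E eqxx.
      - move/negP: Hno; apply; apply/existsP; exists j; apply/existsP; exists i.
        by rewrite H E eqxx. }
    have := @leq_card _ _ f inj. rewrite card_ord Hc. lia. }
set d := b - a.
have Hd : forall r, a <= r -> qst (r + d) = qst r.
{ move=> r Hr. rewrite /qst.
  have -> : r + d = (r - a) + b by lia.
  have {2}-> : r = (r - a) + a by lia.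
  by rewrite !iterD -/(qst a) -/(qst b) E. }
have Hdi : forall r i, a <= r -> qst (r + i * d) = qst r.
{ move=> r i Hr; elim: i => [|i IH]; first by rewrite addn0.
  rewrite mulSn addnA (addnC r d) -addnA. 
  have -> : d + (r + i * d) = (r + i * d) + d by lia.
  rewrite Hd ?IH //. lia. }
have Hdv : d %| nQ`! by apply: dvdn_fact; lia.
move=> r i Hr. case/dvdnP: Hdv => q ->.
rewrite mulnA Hdi //. lia.
Qed.

End Auto.

End PartC.

Section PartD.
Import Order.TTheory GRing.Theory Num.Theory.
Local Open Scope ring_scope.

Lemma Vcorr_ext kk s M (D1 D2 : 'I_kk -> nat) :
  (forall i, D1 i = D2 i) -> Vcorr s M D1 = Vcorr s M D2.
Proof.
move=> E; rewrite /Vcorr; apply: eq_bigr => n _; congr (_ ^+ _).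
by apply: eq_bigr => i _; rewrite E.
Qed.

Lemma Ccorr_ge kk s N (D : 'I_kk -> nat) M : (M <= N)%N ->
  strictly_increasing D -> (forall i, M + D i <= N)%N ->
  (`|Vcorr s M D|%N <= Ccorr kk s N)%N.
Proof.
move=> HMN HD HM.
pose Df : {ffun 'I_kk -> 'I_N.+1} := [ffun i => inord (D i)].
have EDf : forall i, nat_of_ord (Df i) = D i.
{ move=> i; rewrite ffunE inordK //; have := HM i; lia. }
have HMo : (M < N.+1)%N by lia.
rewrite /Ccorr.
have HDf : strictly_increasing (fun i => nat_of_ord (Df i)).
{ apply/forallP => i; apply/forallP => j; rewrite !EDf.
  by move/forallP: HD => /(_ i) /forallP /(_ j). }
apply: leq_trans (leq_bigmax_cond Df HDf).
have HMc : [forall i : 'I_kk, (Ordinal HMo) + Df i <= N]%N.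
{ apply/forallP => i /=; rewrite EDf; exact: HM. }
apply: leq_trans (leq_bigmax_cond (Ordinal HMo) HMc).
by rewrite /= (@Vcorr_ext _ _ _ D (fun i => nat_of_ord (Df i))).
Qed.

Lemma Vcorr_const kk s M (D : 'I_kk -> nat) :
  (forall n, (n < M)%N -> exists b : bool, forall i, s (n + D i)%N = b) ->
  ~~ odd kk -> `|Vcorr s M D|%N = M.
Proof.
move=> H Hk.
rewrite /Vcorr (eq_bigr (fun _ => 1%R)).
- by rewrite sumr_const card_ord natz.
- move=> [n Hn] _ /=. have [b Hb] := H n Hn.
  rewrite (eq_bigr (fun _ => b : nat)); last by move=> i _; rewrite Hb.
  rewrite big_const_ord iter_addn_0.
  have [q ->] : exists q, kk = q.*2 by exists kk./2; rewrite -[LHS](odd_double_half kk) (negbTE Hk).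
  by rewrite -mul2n mulnCA exprM sqrrN !expr1n.
Qed.

End PartD.

Section PartE.

Lemma Upow (U : nat -> nat) K : (forall n, 0 < n -> U n <= K * U n.-1) ->
  forall j r, U (j + r) <= K ^ r * U j.
Proof.
move=> H j; elim => [|r IH]; first by rewrite addn0 expn0 mul1n.
rewrite addnS. apply: leq_trans (H _ (ltn0Sn _)) _ => /=.
rewrite expnS -mulnA leq_mul2l IH orbT //.
Qed.

Lemma main_comb (U : nat -> nat) (h K k nQ : nat) :
  U 0 = 1 -> (forall i, U i < U i.+1) -> 0 < h ->
  (forall n, h <= n -> U n.-1 + U (n - h) <= U n) ->
  (forall n, 0 < n -> U n <= K * U n.-1) -> 1 <= k ->
  let E := ((2 * k).-1 * nQ`! + maxn nQ h)%N in
  forall B : DFAO, #|dfao_state B| = nQ ->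
  forall s, generates B U s ->
  exists N0, forall N, N0 <= N -> N <= 2 * K ^ E.+1 * Ccorr (2 * k) s N.
Proof.
move=> U0 Uinc Hh Ugrow Uup Hk E B HB s Hs.
set P := nQ`!. set g := maxn nQ h.
have HP : 0 < P := fact_gt0 nQ.
exists (2 * U (h.+1 + E)) => N HN.
pose Pj := fun j => 2 * U (j + E) <= N.
have exP : exists j, Pj j by exists h.+1.
have ubP : forall j, Pj j -> j <= N.
{ move=> j; rewrite /Pj => Hj. have := U_ge U0 Uinc (j + E). lia. }
case: (ex_maxnP exP ubP) => jm Hjm Hmax.
have Hjm1 : h.+1 <= jm by apply: Hmax.
have Hnext : N < 2 * U (jm.+1 + E).
{ rewrite ltnNge; apply/negP => H. have := Hmax _ H. lia. }
set J := jm + g.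
set M := U jm.
pose D := fun i : 'I_(2 * k) => U (J + i * P).
have HDle : forall i : 'I_(2 * k), D i <= U (jm + E).
{ move=> i; rewrite /D; apply: (U_le Uinc). rewrite /J /E -/P -/g.
  have Hi := ltn_ord i. have HiP : i * P <= (2 * k).-1 * P by apply: leq_mul => //; lia. lia. }
rewrite /Pj in Hjm.
have HMle : M <= U (jm + E) by apply: (U_le Uinc); lia.
have Hin : forall i, M + D i <= N.
{ move=> i; have := HDle i. rewrite /Pj in Hjm. lia. }
have HC := @Ccorr_ge (2 * k) s N D M ltac:(lia).
have Hsi : strictly_increasing D.
{ apply/forallP => i; apply/forallP => j; apply/implyP => Hij.
  apply: (U_lt Uinc). rewrite ltn_add2l ltn_mul2r HP. exact: Hij. }
have HV : `|Vcorr s M D|%N = M.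
{ apply: Vcorr_const; last by rewrite oddM.
  move=> n Hn.
  have Ejm : jm.-1.+1 = jm by lia.
  have Hn' : n < U jm.-1.+1 by rewrite Ejm.
  have [Ssz _] := @gd_pad U U0 Uinc jm.-1 n Hn'.
  have Hsz : size (rep U n) <= jm by rewrite -Ejm.
  exists (dfao_out (foldl (@dfao_delta B) (qst B (J - size (rep U n))) (rep U n))).
  move=> i. rewrite Hs /D.
  set J' := J + i * P.
  have HnJ : n < U J' by apply: leq_trans Hn (U_le Uinc _); lia.
  have Hgr := Ugrow J'.+1 ltac:(lia).
  have Hjm2 : M <= U (J'.+1 - h) by apply: (U_le Uinc); lia.
  have HJ'0 : 0 < J' by lia.
  have HJ'1 : n + U J' < U J'.+1 by move: Hgr; rewrite /=; lia.
  have [_ ER] := @rep_shift U U0 Uinc J' n HJ'0 HnJ HJ'1.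
  rewrite ER run_shift.
  have -> : J' - size (rep U n) = (J - size (rep U n)) + i * P by lia.
  rewrite (qst_period HB) //. lia. }
have Hpw := Upow Uup jm E.+1.
have H1 : U (jm.+1 + E) <= K ^ E.+1 * M by rewrite addSn -addnS.
have H2 : M <= Ccorr (2 * k) s N by move: HC; rewrite HV; apply.
apply: leq_trans (ltnW Hnext) _.
rewrite -mulnA leq_mul2l /=.
apply: leq_trans H1 _. by rewrite leq_mul2l H2 orbT.
Qed.

End PartE.


Theorem mainTheorem1 :
  forall (beta : R), Rlt 1 beta ->
  forall (t : nat -> nat), is_dbeta1 beta t ->
  forall (m p : nat), minimal_preperiod_period t m p ->
  forall (k : nat), (1 <= k)%N ->
  forall (nQ : nat),
  exists c : R, Rlt 0 c /\
    forall (B : DFAO), #|dfao_state B| = nQ ->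
    forall (s : nat -> bool),
      generates B (fun n => absz (Ubeta t m p n)) s ->
      exists N0 : nat, forall N : nat, (N0 <= N)%N ->
        Rle (Rmult c (INR N)) (INR (Ccorr (2 * k) s N)).
Proof.
move=> beta Hb t Ht m p [[Hp Hper] _] k Hk nQ.
have Ht0 : (1 <= t 0)%N by apply/leP; exact: (t0_pos _ _ Hb Ht).
have [j0 [Hj0a [Hj0b Htj0]]] := period_nonzero _ _ _ _ Hb Ht (conj Hp Hper).
have Hj0 : (m <= j0 < m + p)%N by apply/andP; split; apply/leP.
have Htj0' : (1 <= t j0)%N by apply/leP.
set K := Kc t m p.
set E := ((2 * k).-1 * nQ`! + maxn nQ (m + p))%N.
have HK : (0 < K)%N by rewrite /K /Kc addn1.
exists (Rinv (INR (2 * K ^ E.+1))).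
split.
{ apply: Rinv_0_lt_compat. apply: lt_0_INR. apply/ltP. by rewrite muln_gt0 expn_gt0 HK. }
move=> B HB s Hs.
have U0 := u0 t m p.
have Uinc : forall i, (u t m p i < u t m p i.+1)%N.
{ move=> i. by have [H _ _] := u_props Hp Ht0 Hj0 Htj0' (ltn0Sn i). }
have Ugrow : forall n, (m + p <= n)%N -> (u t m p n.-1 + u t m p (n - (m + p)) <= u t m p n)%N.
{ move=> n Hn. have [_ H _] := u_props Hp Ht0 Hj0 Htj0' (n := n) ltac:(lia). exact: H. }
have Uup : forall n, (0 < n)%N -> (u t m p n <= K * u t m p n.-1)%N.
{ move=> n Hn. by have [_ _ H] := u_props Hp Ht0 Hj0 Htj0' Hn. }
have [N0 HN0] := @main_comb (u t m p) (m + p) K k nQ U0 Uinc ltac:(lia) Ugrow Uup Hk B HB s Hs.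
exists N0 => N HN.
have H := HN0 N HN.
have HX : Rlt 0 (INR (2 * K ^ E.+1)).
{ apply: lt_0_INR. apply/ltP. by rewrite muln_gt0 expn_gt0 HK. }
have HR : Rle (INR N) (Rmult (INR (2 * K ^ E.+1)) (INR (Ccorr (2 * k) s N))).
{ rewrite -mult_INR. apply: le_INR. apply/leP. exact: H. }
apply: (Rmult_le_reg_l (INR (2 * K ^ E.+1))) => //.
rewrite -Rmult_assoc Rinv_r; last by lra.
lra.
Qed.
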